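(* Let $G=(V,E)$ be a finite, simple, connected, undirected graph with vertices $v_1,\dots,v_n$, adjacency matrix $\mathbf{A}$, degree vector $\mathbf{d}=\mathbf{A}\mathbf{1}$, degree matrix $\mathbf{D}=\mathrm{diag}(\mathbf{d})$, and lazy random walk matrix $\mathbf{P}=\tfrac12(\mathbf{I}+\mathbf{A}\mathbf{D}^{-1})$. Fix a vertex $v\in V$, a non-negative signal $\mathbf{x}\in\mathbb{R}^n$ (all entries $\ge 0$), a constant $c>1$, a positive integer $N$, and $\epsilon>0$. Then there exists $K\in\mathbb{N}$ such that the following holds. Let $\mathcal{F}=\mathcal{F}_{\mathrm{A}}\sqcup\mathcal{F}_{\mathrm{C}}$ be any finite, non-empty filter bank (non-decoupled architecture) in which every aggregation filter $f\in\mathcal{F}_{\mathrm{A}}$ is of the form $F_k(\mathbf{x})=\mathbf{P}^k\mathbf{x}$ with $k\ge K$, every comparison filter $f\in\mathcal{F}_{\mathrm{C}}$ is of the form $F_{k_1,k_2}(\mathbf{x})=(\mathbf{P}^{k_1}-\mathbf{P}^{k_2})\mathbf{x}$ with $k_1\neq k_2$ and $k_1,k_2\ge K$, and $|\mathcal{F}_{\mathrm{C}}|\le N$; write $\mathbf{h}_f=f(\mathbf{x})\in\mathbb{R}^n$. Let $(\bar{\mathbf{s}}_f[v])_{f\in\mathcal{F}}$ be any non-negative attention weights at $v$ such that the representation is $c$-band-dominant at $v$, i.e. $$\max\{\bar{\mathbf{s}}_f[v]: f\in\mathcal{F}_{\mathrm{C}}\}=c\cdot\max\{\bar{\mathbf{s}}_f[v]: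 f\in\mathcal{F}_{\mathrm{A}}\}.$$ Then $$\sum_{f\in\mathcal{F}_{\mathrm{C}}}\bar{\mathbf{s}}_f[v]\,\mathbf{h}_f[v]\;\le\;\epsilon\, c\sum_{f\in\mathcal{F}_{\mathrm{A}}}\bar{\mathbf{s}}_f[v]\,\mathbf{h}_f[v].$$
   Context: In the ''non-decoupled architecture'' the filter responses are taken without any learned transformation (the map applied after filtering is the identity), and a single set of normalized attention weights $\bar{\mathbf{s}}_f[v]$ (e.g. a softmax over the whole filter bank, hence non-negative) is assigned at each vertex to all filters in $\mathcal{F}=\mathcal{F}_{\mathrm{A}}\sqcup\mathcal{F}_{\mathrm{C}}$. Aggregation filters $F_k$ are low-pass filters and comparison filters $F_{k_1,k_2}$ are band-pass (diffusion-wavelet) filters. For $\mathbf{x}\in\mathbb{R}^n$, $\mathbf{h}_f[v]$ denotes the entry of $\mathbf{h}_f$ at vertex $v$. *)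

(* Defs.v *)
From HB Require Import structures.
From mathcomp Require Import all_boot all_order all_algebra.
Set Implicit Arguments. Unset Strict Implicit. Unset Printing Implicit Defensive.
Import Order.TTheory GRing.Theory Num.Theory.
Local Open Scope ring_scope.

Definition simple_graph (n : nat) (e : rel 'I_n) : Prop :=
  symmetric e /\ irreflexive e.

Definition connected_graph (n : nat) (e : rel 'I_n) : Prop :=
  forall i j : 'I_n, connect e i j.

Definition adjmx (R : numDomainType) (n : nat) (e : rel 'I_n) : 'M[R]_n :=
  \matrix_(i, j) (e i j)%:R.

Definition degree (R : numDomainType) (n : nat) (e : rel 'I_n) (i : 'I_n) : R :=
  \sum_(j < n) adjmx R e i j.

Definition rwmx (R : numFieldType) (n : nat) (e : rel 'I_n) : 'M[R]_n :=
  \matrix_(i, j) (adjmx R e i j / degree R e j).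

Definition lazy_rw (R : numFieldType) (n : nat) (e : rel 'I_n) : 'M[R]_n :=
  2^-1 *: (1%:M + rwmx R e).

Definition agg_resp (R : numFieldType) (n : nat) (e : rel 'I_n)
  (x : 'cV[R]_n) (k : nat) (v : 'I_n) : R :=
  ((lazy_rw R e ^+ k) *m x) v 0.

Definition cmp_resp (R : numFieldType) (n : nat) (e : rel 'I_n)
  (x : 'cV[R]_n) (k1 k2 : nat) (v : 'I_n) : R :=
  ((lazy_rw R e ^+ k1 - lazy_rw R e ^+ k2) *m x) v 0.

(* maximum of a finite family of reals; the empty maximum is 0
   (weights are non-negative) *)
Definition maxw (R : realDomainType) (m : nat) (s : 'I_m -> R) : R :=
  \big[Num.max/0]_(i < m) s i.

(* Main.v *)
Require Import Defs.
From HB Require Import structures.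
From mathcomp Require Import all_boot all_order all_algebra.
From mathcomp Require Import reals.
From mathcomp Require Import ring lra.
Import Order.TTheory GRing.Theory Num.Theory.
Set Implicit Arguments. Unset Strict Implicit. Unset Printing Implicit Defensive.
Local Open Scope ring_scope.

Definition stp (R : realFieldType) (n : nat) (Q : 'I_n -> 'I_n -> R)
  (y : 'I_n -> R) : 'I_n -> R := fun i => \sum_(j < n) Q i j * y j.

Lemma stp_lb (R : realFieldType) n (Q : 'I_n -> 'I_n -> R) (m : R) y :
  (forall i j, 0 <= Q i j) -> (forall i, \sum_(j < n) Q i j = 1) ->
  (forall j, m <= y j) -> forall i, m <= stp Q y i.
Proof.
move=> Q0 Q1 Hy i; rewrite /stp -[m]mul1r -(Q1 i) mulr_suml.
by apply: ler_sum => j _; apply: ler_wpM2l.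
Qed.

Lemma iter_lb (R : realFieldType) n (Q : 'I_n -> 'I_n -> R) (m : R) y :
  (forall i j, 0 <= Q i j) -> (forall i, \sum_(j < n) Q i j = 1) ->
  (forall j, m <= y j) -> forall k i, m <= iter k (stp Q) y i.
Proof.
move=> Q0 Q1 Hy; elim=> [|k IH] i //=; exact: stp_lb.
Qed.

Lemma iter_opp (R : realFieldType) n (Q : 'I_n -> 'I_n -> R) y k i :
  iter k (stp Q) (fun j => - y j) i = - iter k (stp Q) y i.
Proof.
elim: k i => [|k IH] i //=; rewrite /stp -sumrN; apply: eq_bigr => j _.
by rewrite IH mulrN.
Qed.

Lemma iter_ub (R : realFieldType) n (Q : 'I_n -> 'I_n -> R) (M : R) y :
  (forall i j, 0 <= Q i j) -> (forall i, \sum_(j < n) Q i j = 1) ->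
  (forall j, y j <= M) -> forall k i, iter k (stp Q) y i <= M.
Proof.
move=> Q0 Q1 Hy k i; rewrite -(opprK (iter _ _ _ _)) -iter_opp lerNl.
by apply: iter_lb => // j; rewrite lerN2.
Qed.

Lemma stp_gap (R : realFieldType) n (Q : 'I_n -> 'I_n -> R) (m a : R) y i l :
  (forall i j, 0 <= Q i j) -> (forall i, \sum_(j < n) Q i j = 1) ->
  (forall j, m <= y j) -> a <= Q i l -> 0 <= a ->
  a * (y l - m) <= stp Q y i - m.
Proof.
move=> Q0 Q1 Hy Ha a0.
have -> : stp Q y i - m = \sum_(j < n) Q i j * (y j - m).
  rewrite /stp -[X in _ - X]mul1r -(Q1 i) mulr_suml -sumrB.
  by apply: eq_bigr => j _; rewrite mulrBr.
rewrite (bigD1 l) //=; apply: (@le_trans _ _ (Q i l * (y l - m))).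
  by apply: ler_wpM2r; rewrite ?subr_ge0.
rewrite lerDl.
by apply: sumr_ge0 => j _; apply: mulr_ge0; rewrite ?subr_ge0.
Qed.

Lemma path_gap (R : realFieldType) n (Q : 'I_n -> 'I_n -> R) (e : rel 'I_n)
  (a m : R) y :
  (forall i j, 0 <= Q i j) -> (forall i, \sum_(j < n) Q i j = 1) ->
  (forall j, m <= y j) -> 0 <= a -> (forall i l, e i l -> a <= Q i l) ->
  forall p i, path e i p ->
  a ^+ (size p) * (y (last i p) - m) <= iter (size p) (stp Q) y i - m.
Proof.
move=> Q0 Q1 Hy a0 He; elim=> [|l p IH] i /=.
  by rewrite expr0 mul1r.
move=> /andP[eil Hp]; rewrite exprS -mulrA.
apply: le_trans (stp_gap Q0 Q1 _ (He _ _ eil) a0).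
  by apply: ler_wpM2l => //; exact: IH.
exact: iter_lb.
Qed.

Lemma lazy_gap (R : realFieldType) n (Q : 'I_n -> 'I_n -> R)
  (a m : R) y :
  (forall i j, 0 <= Q i j) -> (forall i, \sum_(j < n) Q i j = 1) ->
  (forall j, m <= y j) -> 0 <= a -> (forall i, a <= Q i i) ->
  forall s d i (w : R), a ^+ s * w <= iter s (stp Q) y i - m ->
  a ^+ (s + d) * w <= iter (s + d) (stp Q) y i - m.
Proof.
move=> Q0 Q1 Hy a0 Hd s; elim=> [|d IH] i w H; first by rewrite addn0.
rewrite addnS exprS -mulrA /=.
apply: le_trans (stp_gap Q0 Q1 _ (Hd i) a0).
  by apply: ler_wpM2l => //; exact: IH.
exact: iter_lb.
Qed.

Lemma reach_gap (R : realFieldType) n (Q : 'I_n -> 'I_n -> R) (e : rel 'I_n)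
  (a m : R) y :
  (forall i j, 0 <= Q i j) -> (forall i, \sum_(j < n) Q i j = 1) ->
  (forall j, m <= y j) -> 0 <= a -> (forall i l, e i l -> a <= Q i l) ->
  (forall i, a <= Q i i) -> (forall i j, connect e i j) ->
  forall i j, a ^+ n * (y j - m) <= iter n (stp Q) y i - m.
Proof.
move=> Q0 Q1 Hy a0 He Hd Hc i j.
case/connectP: (Hc i j) => p Hp ->.
case/shortenP: Hp => p' Hp' Hu _.
have Hs : (size p' <= n)%N.
  have := max_card (mem (i :: p')); rewrite card_ord (card_uniqP Hu) /=.
  by move=> h; apply: ltnW.
have := lazy_gap Q0 Q1 Hy a0 Hd (n - size p')%N (path_gap Q0 Q1 Hy a0 He Hp').
by rewrite (subnKC Hs).
Qed.

Lemma contract (R : realFieldType) n (Q : 'I_n -> 'I_n -> R) (e : rel 'I_n)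
  (a m M : R) y (j0 : 'I_n) :
  (forall i j, 0 <= Q i j) -> (forall i, \sum_(j < n) Q i j = 1) ->
  0 <= a -> (forall i l, e i l -> a <= Q i l) ->
  (forall i, a <= Q i i) -> (forall i j, connect e i j) ->
  (forall j, m <= y j) -> (forall j, y j <= M) ->
  exists m' M', (forall i, m' <= iter n (stp Q) y i /\ iter n (stp Q) y i <= M')
    /\ M' - m' <= (1 - a ^+ n / 2) * (M - m).
Proof.
move=> Q0 Q1 a0 He Hd Hc Hm HM.
have b0 : 0 <= a ^+ n by apply: exprn_ge0.
have mM : m <= M by apply: le_trans (Hm j0) (HM j0).
have [h|h] := lerP ((m + M) / 2) (y j0).
  exists (m + a ^+ n * (y j0 - m)), M; split.
    move=> i; split; last exact: iter_ub.
    have := reach_gap Q0 Q1 Hm a0 He Hd Hc i j0; lra.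
  have : a ^+ n * ((M - m) / 2) <= a ^+ n * (y j0 - m).
    by apply: ler_wpM2l => //; lra.
  lra.
exists m, (M - a ^+ n * (M - y j0)); split.
  move=> i; split; first exact: iter_lb.
  have Hm' : forall j, - M <= - y j by move=> j; rewrite lerN2.
  have := reach_gap Q0 Q1 Hm' a0 He Hd Hc i j0.
  rewrite iter_opp; lra.
have : a ^+ n * ((M - m) / 2) <= a ^+ n * (M - y j0).
  by apply: ler_wpM2l => //; lra.
lra.
Qed.

Lemma contract_iter (R : realFieldType) n (Q : 'I_n -> 'I_n -> R) (e : rel 'I_n)
  (a m M : R) y (j0 : 'I_n) :
  (forall i j, 0 <= Q i j) -> (forall i, \sum_(j < n) Q i j = 1) ->
  0 <= a -> (forall i l, e i l -> a <= Q i l) ->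
  (forall i, a <= Q i i) -> (forall i j, connect e i j) ->
  (forall j, m <= y j) -> (forall j, y j <= M) ->
  forall t, exists m' M',
    (forall i, m' <= iter (n * t) (stp Q) y i /\ iter (n * t) (stp Q) y i <= M')
    /\ M' - m' <= (1 - a ^+ n / 2) ^+ t * (M - m).
Proof.
move=> Q0 Q1 a0 He Hd Hc Hm HM; elim=> [|t [m' [M' [H1 H2]]]].
  by exists m, M; rewrite muln0 expr0 mul1r; split.
have [m'' [M'' [H3 H4]]] := contract j0 Q0 Q1 a0 He Hd Hc
  (fun j => (H1 j).1) (fun j => (H1 j).2).
exists m'', M''; rewrite mulnS iterD; split => //.
apply: le_trans H4 _; rewrite exprS -mulrA; apply: ler_wpM2l => //.
have : a ^+ n <= 1.
  apply: exprn_ile1 => //; apply: le_trans (Hd j0) _.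
  by rewrite -(Q1 j0) (bigD1 j0) //= lerDl sumr_ge0.
lra.
Qed.

Lemma bern (R : realFieldType) (u : R) t :
  0 <= u -> u <= 1 -> (1 - u) ^+ t * (1 + t%:R * u) <= 1.
Proof.
move=> u0 u1; elim: t => [|t IH]; first by rewrite expr0 mul1r mul0r addr0.
have g0 : 0 <= (1 - u) ^+ t by apply: exprn_ge0; lra.
rewrite exprS [_ * (1 - u) ^+ t]mulrC -mulrA.
apply: le_trans IH; apply: ler_wpM2l => //.
have tu : 0 <= t%:R * u by apply: mulr_ge0.
rewrite -natr1 mulrDl mul1r; nra.
Qed.

Lemma geo_small (R : archiRealFieldType) (u d : R) :
  0 < u -> u <= 1 -> 0 < d -> exists t, (1 - u) ^+ t <= d.
Proof.
move=> u0 u1 d0.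
have h0 : 0 <= (d * u)^-1 by rewrite invr_ge0 ltW // mulr_gt0.
have := archi_boundP h0; set t := Num.Def.archi_bound _ => Ht.
exists t.
have := bern t (ltW u0) u1.
have g0 : 0 <= (1 - u) ^+ t by apply: exprn_ge0; lra.
have tu : d^-1 < t%:R * u.
  have : (d * u)^-1 * u < t%:R * u by rewrite ltr_pM2r.
  by rewrite invfM -mulrA mulVf ?mulr1 // gt_eqF.
have di : 0 < d^-1 by rewrite invr_gt0.
have p : 0 < 1 + t%:R * u by lra.
move=> H.
have : (1 - u) ^+ t <= (1 + t%:R * u)^-1.
  by rewrite -[(1 + _)^-1]mul1r ler_pdivlMr.
move=> H2; apply: le_trans H2 _.
rewrite -[d]invrK lef_pV2 ?posrE ?invr_gt0 //; lra.
Qed.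

Lemma maxw_ge0 (R : realDomainType) m (s : 'I_m -> R) : 0 <= maxw s.
Proof. by rewrite /maxw; elim/big_rec: _ => // i x _ hx; rewrite le_max hx orbT. Qed.

Lemma le_maxw (R : realDomainType) m (s : 'I_m -> R) j : s j <= maxw s.
Proof. by rewrite /maxw (bigD1 j) //= le_max lexx. Qed.

Lemma maxw_le_sum (R : realDomainType) m (s : 'I_m -> R) :
  (forall i, 0 <= s i) -> maxw s <= \sum_(i < m) s i.
Proof.
move=> s0; rewrite /maxw.
suff : \big[Num.max/0]_(i < m) s i <= \sum_(i < m) s i /\ 0 <= \sum_(i < m) s i by case.
elim/big_ind2: _ => //.
  move=> a1 a2 b1 b2 [h1 h2] [h3 h4]; split; last exact: addr_ge0.
  rewrite ge_max; apply/andP; split.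
    by apply: le_trans h1 _; rewrite lerDl.
  by apply: le_trans h3 _; rewrite lerDr.

Qed.

Lemma adj_ge0 (R : numDomainType) n (e : rel 'I_n) i j : 0 <= adjmx R e i j.
Proof. by rewrite /adjmx mxE ler0n. Qed.

Lemma deg_le (R : realFieldType) n (e : rel 'I_n) i : degree R e i <= n%:R.
Proof.
rewrite /degree -[n in n%:R]card_ord -sumr_const.
by apply: ler_sum => j _; rewrite /adjmx mxE lern1 leq_b1.
Qed.

Lemma deg_ge (R : realFieldType) n (e : rel 'I_n) i l :
  e i l -> 1 <= degree R e i.
Proof.
move=> eil; rewrite /degree (bigD1 l) //= {1}/adjmx mxE eil.
by rewrite lerDl sumr_ge0 // => j _; exact: adj_ge0.
Qed.

Lemma deg_pos (R : realFieldType) n (e : rel 'I_n) :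
  (1 < n)%N -> connected_graph e -> forall i, 0 < degree R e i.
Proof.
move=> n1 Hc i.
have [j ji] : exists j : 'I_n, j != i.
  have h0 : (0 < n)%N by apply: ltnW.
  case: (eqVneq i (Ordinal h0)) => [->|ne].
    by exists (Ordinal n1); rewrite -val_eqE.
  by exists (Ordinal h0); rewrite eq_sym.
case/connectP: (Hc i j) => [[|l p]] /=; first by move=> _ eq; rewrite eq eqxx in ji.
case/andP=> eil _ _; apply: lt_le_trans (deg_ge R eil); exact: ltr01.
Qed.

Definition Qm (R : realFieldType) n (e : rel 'I_n) : 'I_n -> 'I_n -> R :=
  fun i j => (i == j)%:R / 2 + adjmx R e i j / (2 * degree R e i).


Lemma Q0 (R : realFieldType) n (e : rel 'I_n) :
  (forall i, 0 < degree R e i) -> forall i j, 0 <= Qm R e i j.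
Proof.
move=> Hd i j; rewrite /Qm; apply: addr_ge0.
  by apply: divr_ge0; rewrite ?ler0n.
apply: divr_ge0; first exact: adj_ge0.
by apply: mulr_ge0; [rewrite ler0n | exact: ltW].
Qed.

Lemma Q1 (R : realFieldType) n (e : rel 'I_n) :
  (forall i, 0 < degree R e i) -> forall i, \sum_(j < n) Qm R e i j = 1.
Proof.
move=> Hd i; rewrite /Qm big_split /= -!mulr_suml.
rewrite (bigD1 i) //= eqxx big1 ?addr0; last by move=> j /negbTE; rewrite eq_sym => ->.
rewrite -/(degree R e i).
have := Hd i => h.
have h2 : degree R e i != 0 by exact: lt0r_neq0.
rewrite /= invfM mulrCA divff // mulr1; by field.
Qed.

Lemma Qdiag (R : realFieldType) n (e : rel 'I_n) :
  (0 < n)%N -> (forall i, 0 < degree R e i) ->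
  forall i, (2 * n%:R)^-1 <= Qm R e i i.
Proof.
move=> n0 Hd i; rewrite /Qm eqxx.
have h1 : 1 <= (n%:R : R) by rewrite ler1n.
have h : (2 * n%:R)^-1 <= 2^-1 :> R.
  rewrite lef_pV2; [lra | by rewrite posrE mulr_gt0 // ltr0n | by rewrite posrE].
have h3 : 0 <= adjmx R e i i / (2 * degree R e i).
  apply: divr_ge0; first exact: adj_ge0.
  by apply: mulr_ge0; [rewrite ler0n | exact: ltW].
rewrite mul1r; lra.
Qed.

Lemma Qedge (R : realFieldType) n (e : rel 'I_n) :
  (0 < n)%N -> (forall i, 0 < degree R e i) ->
  forall i l, e i l -> (2 * n%:R)^-1 <= Qm R e i l.
Proof.
move=> n0 Hd i l eil; rewrite /Qm /adjmx mxE eil mul1r.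
have h0 : 0 <= (i == l)%:R / 2 :> R by apply: divr_ge0; rewrite ?ler0n.
have h1 : (2 * n%:R)^-1 <= (2 * degree R e i)^-1 :> R.
  rewrite lef_pV2 ?posrE ?mulr_gt0 ?ltr0n ?Hd //.
  rewrite ler_pM2l ?ltr0n //; exact: deg_le.
lra.
Qed.

Lemma agg_rel (R : realFieldType) n (e : rel 'I_n) (x : 'cV[R]_n) :
  (forall i, 0 < degree R e i) -> forall k i,
  ((lazy_rw R e ^+ k) *m x) i 0 =
    degree R e i * iter k (stp (Qm R e)) (fun j => x j 0 / degree R e j) i.
Proof.
move=> Hd; elim=> [|k IH] i.
  rewrite expr0 mul1mx /= mulrC divfK //; exact: lt0r_neq0.
rewrite exprS -mulmxA mxE /= /stp mulr_sumr; apply: eq_bigr => j _.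
rewrite IH; set z := iter _ _ _.
rewrite /lazy_rw /rwmx /Qm !mxE.
have hi := lt0r_neq0 (Hd i); have hj := lt0r_neq0 (Hd j).
case: (eqVneq i j) => [<-|ne] /=.
  by field.
rewrite mul0r !add0r; field; rewrite ?hi ?hj //.
Qed.

Lemma cmp_rel (R : realFieldType) n (e : rel 'I_n) (x : 'cV[R]_n) k1 k2 v :
  cmp_resp e x k1 k2 v = agg_resp e x k1 v - agg_resp e x k2 v.
Proof. rewrite /cmp_resp /agg_resp mulmxBl [LHS]mxE [X in _ + X = _]mxE; reflexivity. Qed.

Theorem theorem1 (R : realType) (n : nat) (e : rel 'I_n)
  (v : 'I_n) (x : 'cV[R]_n) (c : R) (N : nat) (eps : R) :
  (1 < n)%N -> simple_graph e -> connected_graph e ->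
  (forall i, 0 <= x i 0) -> 1 < c -> (0 < N)%N -> 0 < eps ->
  exists K : nat,
    forall (a b : nat) (kA : 'I_a -> nat) (kC : 'I_b -> nat * nat)
           (sA : 'I_a -> R) (sC : 'I_b -> R),
      (0 < a + b)%N ->
      (forall i, (K <= kA i)%N) ->
      (forall j, (kC j).1 != (kC j).2 /\ (K <= (kC j).1)%N /\ (K <= (kC j).2)%N) ->
      (b <= N)%N ->
      (forall i, 0 <= sA i) -> (forall j, 0 <= sC j) ->
      maxw sC = c * maxw sA ->
      \sum_(j < b) sC j * cmp_resp e x (kC j).1 (kC j).2 v
        <= eps * c * \sum_(i < a) sA i * agg_resp e x (kA i) v.
Proof.
move=> n1 _ Hc x0 c1 N0 eps0.
have n0 : (0 < n)%N by apply: ltnW.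
have Hd := deg_pos R n1 Hc.
have HQ0 := Q0 Hd; have HQ1 := Q1 Hd.
have HQd := Qdiag n0 Hd; have HQe := Qedge n0 Hd.
set Q := Qm R e in HQ0 HQ1 HQd HQe.
set al : R := (2 * n%:R)^-1 in HQd HQe.
have nR : 0 < (n%:R : R) by rewrite ltr0n.
have al0 : 0 < al by rewrite invr_gt0 mulr_gt0.
have al1 : al <= 1.
  apply: le_trans (HQd v) _; rewrite -(HQ1 v) (bigD1 v) //= lerDl.
  by apply: sumr_ge0 => j _.
set be := al ^+ n.
have be0 : 0 < be by apply: exprn_gt0.
have be1 : be <= 1 by apply: exprn_ile1 => //; apply: ltW.
set y0 := fun j => x j 0 / degree R e j.
have y00 : forall j, 0 <= y0 j.
  by move=> j; apply: divr_ge0 => //; apply: ltW.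
set S := \sum_(j < n) y0 j.
have y0S : forall j, y0 j <= S.
  by move=> j; rewrite /S (bigD1 j) //= lerDl; apply: sumr_ge0.
have S0 : 0 <= S by apply: sumr_ge0.
set L := be * S / n%:R.
have L0 : 0 <= L by apply: divr_ge0; [apply: mulr_ge0; [apply: ltW|] | apply: ltW].
have HLn : forall i, L <= iter n (stp Q) y0 i.
  move=> i.
  have h : forall j, be * y0 j <= iter n (stp Q) y0 i.
    move=> j; have := reach_gap HQ0 HQ1 y00 (ltW al0) HQe HQd Hc i j.
    by rewrite !subr0.
  have : \sum_(j < n) be * y0 j <= \sum_(j < n) iter n (stp Q) y0 i.
    by apply: ler_sum => j _; apply: h.
  rewrite -mulr_sumr sumr_const card_ord -mulr_natl => hs.
  by rewrite /L ler_pdivrMr // [_ * n%:R]mulrC.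
have HL : forall k, (n <= k)%N -> forall i, L <= iter k (stp Q) y0 i.
  move=> k nk i; rewrite -(subnK nk) iterD.
  by apply: iter_lb.
have dlt : 0 < eps * be / (n%:R * N%:R).
  by apply: divr_gt0; [apply: mulr_gt0 | apply: mulr_gt0; rewrite ?ltr0n].
have u0 : 0 < be / 2 by apply: divr_gt0.
have u1 : be / 2 <= 1 by lra.
have [t Ht] := geo_small u0 u1 dlt.
have [mt [Mt [Hb Hgap]]] := contract_iter v HQ0 HQ1 (ltW al0) HQe HQd Hc y00 y0S t.
exists (n * t + n)%N.
move=> a b kA kC sA sC _ HkA HkC bN sA0 sC0 Hmax.
have Hw : forall k, (n * t <= k)%N -> mt <= iter k (stp Q) y0 v /\ iter k (stp Q) y0 v <= Mt.
  move=> k hk; rewrite -(subnK hk) iterD; split.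
    by apply: iter_lb => j; case: (Hb j).
  by apply: iter_ub => j; case: (Hb j).
have dv := Hd v.
have gap : Mt - mt <= eps * L / N%:R.
  apply: le_trans Hgap _; rewrite subr0.
  apply: le_trans (_ : eps * be / (n%:R * N%:R) * S <= _).
    by apply: ler_wpM2r.
  rewrite /L le_eqVlt; apply/orP; left; apply/eqP; field.
  by apply/andP; split; rewrite pnatr_eq0 -lt0n.
set B := degree R e v * (eps * L / N%:R).
have B0 : 0 <= B.
  apply: mulr_ge0; first by apply: ltW.
  by apply: divr_ge0; [apply: mulr_ge0; [apply: ltW|] | rewrite ler0n].
have Hcmp : forall j, cmp_resp e x (kC j).1 (kC j).2 v <= B.
  move=> j; case: (HkC j) => _ [h1 h2].
  rewrite cmp_rel /agg_resp !agg_rel //.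
  have [w1 w2] := Hw _ (leq_trans (leq_addr _ _) h1).
  have [w3 w4] := Hw _ (leq_trans (leq_addr _ _) h2).
  rewrite -mulrBr /B; apply: ler_wpM2l; first by apply: ltW.
  lra.
have Hagg : forall i, degree R e v * L <= agg_resp e x (kA i) v.
  move=> i; rewrite /agg_resp agg_rel //; apply: ler_wpM2l; first by apply: ltW.
  by apply: HL; apply: leq_trans (leq_addl _ _) (HkA i).
have mC0 := maxw_ge0 sC.
have E1 : \sum_(j < b) sC j * cmp_resp e x (kC j).1 (kC j).2 v <= b%:R * (maxw sC * B).
  apply: le_trans (_ : _ <= \sum_(j < b) maxw sC * B) _.
    apply: ler_sum => j _; apply: le_trans (ler_wpM2l (sC0 j) (Hcmp j)) _.
    by apply: ler_wpM2r => //; apply: le_maxw.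
  by rewrite sumr_const card_ord mulr_natl.
have E2 : b%:R * (maxw sC * B) <= N%:R * (maxw sC * B).
  by apply: ler_wpM2r; [apply: mulr_ge0 | rewrite ler_nat].
have E3 : N%:R * (maxw sC * B) = eps * c * (degree R e v * L) * maxw sA.
  rewrite Hmax /B; field.
  by rewrite pnatr_eq0 -lt0n.
have c0 : 0 <= eps * c * (degree R e v * L).
  apply: mulr_ge0; first by apply: mulr_ge0; lra.
  by apply: mulr_ge0 => //; apply: ltW.
have E4 : eps * c * (degree R e v * L) * maxw sA <=
          eps * c * (degree R e v * L) * \sum_(i < a) sA i.
  by apply: ler_wpM2l => //; apply: maxw_le_sum.
have E5 : eps * c * (degree R e v * L) * \sum_(i < a) sA i <=
          eps * c * \sum_(i < a) sA i * agg_resp e x (kA i) v.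
  have key : (degree R e v * L) * \sum_(i < a) sA i <=
              \sum_(i < a) sA i * agg_resp e x (kA i) v.
    rewrite mulr_sumr; apply: ler_sum => i _; rewrite mulrC.
    by apply: ler_wpM2l => //; apply: Hagg.
  have ec : 0 <= eps * c by apply: mulr_ge0; lra.
  have := ler_wpM2l ec key; by rewrite !mulrA.
apply: le_trans E1 _; apply: le_trans E2 _; rewrite E3.
by apply: le_trans E4 E5.
Qed.
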